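(* Let $\mathcal{A}=M_{n_1}\oplus\cdots\oplus M_{n_d}$, viewed as the block-diagonal subalgebra of $M_m$ with $m=n_1+\cdots+n_d$, let $\tau$ be a completely positive map on $\mathcal{A}$ and $\widetilde{\tau}$ its canonical extension to $M_m$. The following are equivalent: (1) $\tau$ is irreducible; (2) $\widetilde{\tau}$ is irreducible; (3) there exist $A_1,\dots,A_p\in M_m$ generating $M_m$ as an algebra such that $\widetilde{\tau}(X)=\sum_{i=1}^pA_i^*XA_i$ for all $X\in M_m$ (in particular $\tau(X)=\sum_{i=1}^pA_i^*XA_i$ for all $X\in\mathcal{A}$); (4) there exist $A_1,\dots,A_p\in M_m$ generating $M_m$ as an algebra such that $\tau(X)=\sum_{i=1}^pA_i^*XA_i$ for all $X\in\mathcal{A}$.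
   Context: The canonical extension is $\widetilde{\tau}=\iota\circ\tau\circ\phi$, where $\iota:\mathcal{A}\hookrightarrow M_m$ is the block-diagonal embedding and $\phi:M_m\to\mathcal{A}$ maps a block matrix $(X_{ij})$ to its block-diagonal part $X_{11}\oplus\cdots\oplus X_{dd}$. A positive map $\varphi$ on a finite dimensional $C^*$-algebra $\mathcal{B}$ is irreducible if there is no projection $p\in\mathcal{B}$, $p\ne0,1$, with $\varphi(p\mathcal{B}p)\subseteq p\mathcal{B}p$. *)

(* Defs.v *)
From HB Require Import structures.
From mathcomp Require Import all_boot all_order all_algebra.
Set Implicit Arguments. Unset Strict Implicit. Unset Printing Implicit Defensive.
Import Order.TTheory GRing.Theory Num.Theory.
Local Open Scope ring_scope.

Section Defs.
Variable C : numClosedFieldType.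

Definition adjmx {k l : nat} (M : 'M[C]_(k, l)) : 'M[C]_(l, k) :=
  (map_mx (fun x => x^*) M)^T.

Definition psdmx {k : nat} (M : 'M[C]_k) : Prop :=
  exists Y : 'M[C]_k, M = adjmx Y *m Y.

Definition projmx {k : nat} (P : 'M[C]_k) : Prop :=
  adjmx P = P /\ P *m P = P.

Variable d : nat.
Variable n : 'I_d -> nat.
Local Notation m := (\sum_(i < d) n i)%N.

(* phi : M_m -> A, the block-diagonal part X_11 + ... + X_dd
   (composed with the inclusion iota into M_m) *)
Definition blockdiag_part (X : 'M[C]_m) : 'M[C]_m :=
  \mxdiag_(i < d) submxblock X i i.

(* A = M_{n_1} (+) ... (+) M_{n_d}, as block-diagonal subalgebra of M_m *)
Definition in_blockdiag (X : 'M[C]_m) : Prop := blockdiag_part X = X.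

(* completely positive on A: for all k, id_k (x) tau is positive on M_k(A) *)
Definition completely_positive_on (B : 'M[C]_m -> Prop)
    (f : 'M[C]_m -> 'M[C]_m) : Prop :=
  forall (k : nat) (X : 'I_k -> 'I_k -> 'M[C]_m),
    (forall a b, B (X a b)) ->
    psdmx (\mxblock_(a < k, b < k) X a b) ->
    psdmx (\mxblock_(a < k, b < k) f (X a b)).

Definition irreducible_on (B : 'M[C]_m -> Prop) (f : 'M[C]_m -> 'M[C]_m) : Prop :=
  ~ exists P : 'M[C]_m,
      [/\ B P, projmx P, P <> 0, P <> 1%:M &
          forall X, B X -> exists Y, B Y /\ f (P *m X *m P) = P *m Y *m P].

Definition generates_full {k p : nat} (A : 'I_p -> 'M[C]_k) : Prop :=
  forall S : 'M[C]_k -> Prop,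
    S 1%:M ->
    (forall x y, S x -> S y -> S (x + y)) ->
    (forall x y, S x -> S y -> S (x *m y)) ->
    (forall (c : C) x, S x -> S (c *: x)) ->
    (forall i, S (A i)) ->
    forall X, S X.

End Defs.

(* Main.v *)
Require Import Defs.
From HB Require Import structures.
From mathcomp Require Import all_boot all_order all_algebra.
From Stdlib Require Import Classical.
From mathcomp Require Import zify.
Set Implicit Arguments. Unset Strict Implicit. Unset Printing Implicit Defensive.
Import Order.TTheory GRing.Theory Num.Theory.
Local Open Scope ring_scope.


Section Adj.
Variable C : numClosedFieldType.

Lemma adjmxE k l (M : 'M[C]_(k,l)) i j : adjmx M i j = (M j i)^*.
Proof. by rewrite /adjmx !mxE. Qed.

Lemma adjmxK k l (M : 'M[C]_(k,l)) : adjmx (adjmx M) = M.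
Proof. by apply/matrixP=> i j; rewrite !adjmxE conjCK. Qed.

Lemma adjmxM k l r (A : 'M[C]_(k,l)) (B : 'M[C]_(l,r)) :
  adjmx (A *m B) = adjmx B *m adjmx A.
Proof.
apply/matrixP=> i j; rewrite adjmxE !mxE rmorph_sum; apply: eq_bigr => s _.
by rewrite !adjmxE rmorphM mulrC.
Qed.

Lemma adjmxD k l (A B : 'M[C]_(k,l)) : adjmx (A + B) = adjmx A + adjmx B.
Proof. by apply/matrixP=> i j; rewrite !adjmxE !mxE rmorphD. Qed.

Lemma adjmxN k l (A : 'M[C]_(k,l)) : adjmx (- A) = - adjmx A.
Proof. by apply/matrixP=> i j; rewrite !adjmxE !mxE rmorphN. Qed.

Lemma adjmxB k l (A B : 'M[C]_(k,l)) : adjmx (A - B) = adjmx A - adjmx B.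
Proof. by rewrite adjmxD adjmxN. Qed.

Lemma adjmxZ k l c (A : 'M[C]_(k,l)) : adjmx (c *: A) = c^* *: adjmx A.
Proof. by apply/matrixP=> i j; rewrite !adjmxE !mxE rmorphM. Qed.

Lemma adjmx0 k l : adjmx (0 : 'M[C]_(k,l)) = 0.
Proof. by apply/matrixP=> i j; rewrite adjmxE !mxE rmorph0. Qed.

Lemma adjmx_scalar k (c : C) : adjmx (c%:M : 'M[C]_k) = c^*%:M.
Proof.
apply/matrixP=> i j; rewrite adjmxE !mxE eq_sym.
by case: eqP => _; rewrite ?mulr1n ?mulr0n ?rmorph0.
Qed.

Lemma adjmx1 k : adjmx (1%:M : 'M[C]_k) = 1%:M.
Proof. by rewrite adjmx_scalar rmorph1. Qed.

Lemma adjmx_sum k l (I : finType) (F : I -> 'M[C]_(k,l)) :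
  adjmx (\sum_i F i) = \sum_i adjmx (F i).
Proof.
apply/matrixP=> i j; rewrite adjmxE !summxE rmorph_sum; apply: eq_bigr => s _.
by rewrite adjmxE.
Qed.

Lemma adjmx_invmx k (A : 'M[C]_k) : adjmx (invmx A) = invmx (adjmx A).
Proof. by rewrite /adjmx map_invmx trmx_inv. Qed.

Lemma adjmxM_diag k l (B : 'M[C]_(k,l)) s :
  (adjmx B *m B) s s = \sum_r `|B r s| ^+ 2.
Proof.
rewrite mxE; apply: eq_bigr => r _; rewrite adjmxE.
by rewrite normCK mulrC.
Qed.

Lemma sum_adj_eq0 k l (I : finType) (B : I -> 'M[C]_(k,l)) :
  \sum_i adjmx (B i) *m B i = 0 -> forall i, B i = 0.
Proof.
move=> H i; apply/matrixP=> r s; rewrite mxE.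
have: ((\sum_i adjmx (B i) *m B i) s s) = 0 by rewrite H mxE.
rewrite summxE.
under eq_bigr do rewrite adjmxM_diag.
move/eqP; rewrite psumr_eq0 => [/allP Hall|]; last first.
  by move=> j _; rewrite sumr_ge0 // => r' _; rewrite exprn_ge0.
have := Hall i (mem_index_enum i); rewrite implyTb psumr_eq0; last first.
  by move=> r' _; rewrite exprn_ge0.
move/allP/(_ r (mem_index_enum r)); rewrite implyTb sqrf_eq0 normr_eq0.
by move/eqP.
Qed.

End Adj.


Section Gen.
Variable C : numClosedFieldType.
Variables (m d : nat) (blk : 'I_m -> 'I_d).
Local Notation M := 'M[C]_m.

Definition phi (X : M) : M := \matrix_(a, b) if blk a == blk b then X a b else 0.
Definition inA (X : M) : Prop := phi X = X.

Definition Eb (j : 'I_d) : M := diag_mx (\row_a (blk a == j)%:R).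

Lemma mulEl j (X : M) a b : (Eb j *m X) a b = (blk a == j)%:R * X a b.
Proof. by rewrite mul_diag_mx !mxE. Qed.

Lemma mulEr j (X : M) a b : (X *m Eb j) a b = X a b * (blk b == j)%:R.
Proof. by rewrite mul_mx_diag !mxE. Qed.

Lemma EbE j a b : Eb j a b = ((a == b) && (blk a == j))%:R.
Proof. by rewrite !mxE; case: (a == b); case: (blk a == j). Qed.

Lemma adjEb j : adjmx (Eb j) = Eb j.
Proof.
apply/matrixP=> a b; rewrite adjmxE !EbE eq_sym.
case: eqP => [->|] /=; last by rewrite rmorph0.
by case: (blk b == j); rewrite ?rmorph1 ?rmorph0.
Qed.

Lemma EbEb j k : Eb j *m Eb k = if j == k then Eb j else 0.
Proof.
apply/matrixP=> a b; rewrite mulEl !EbE.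
case: (eqVneq j k) => [<-|ne].
  by rewrite EbE; case: (blk a == j); case: (a == b); rewrite /= ?mul1r ?mul0r.
rewrite mxE; case: (eqVneq (blk a) j) => [ea|]; last by rewrite mul0r.
by rewrite ea (negbTE ne) andbF mulr0.
Qed.

Lemma EbEb_same j : Eb j *m Eb j = Eb j.
Proof. by rewrite EbEb eqxx. Qed.

Lemma sumEb : \sum_j Eb j = 1%:M.
Proof.
apply/matrixP=> a b; rewrite summxE [RHS]mxE.
under eq_bigr do rewrite EbE.
case: (a == b) => /=; last by rewrite big1.
rewrite (bigD1 (blk a)) //= eqxx big1 ?addr0 // => j /negbTE.
by rewrite eq_sym => ->.
Qed.

Lemma phiE (X : M) : phi X = \sum_j Eb j *m X *m Eb j.
Proof.
apply/matrixP=> a b; rewrite summxE mxE.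
under eq_bigr do rewrite mulEr mulEl.
case: (eqVneq (blk a) (blk b)) => [e|ne].
  rewrite (bigD1 (blk a)) //= -e eqxx mul1r mulr1 big1 ?addr0 // => j.
  by rewrite eq_sym => /negbTE ->; rewrite mul0r mul0r.
rewrite big1 // => j _; case: (eqVneq (blk a) j) => [ea|]; last by rewrite mul0r mul0r.
case: (eqVneq (blk b) j) => [eb|]; last by rewrite mulr0.
by move: ne; rewrite ea eb eqxx.
Qed.

Lemma inAE (X : M) : inA X <-> forall a b, blk a != blk b -> X a b = 0.
Proof.
rewrite /inA; split.
  by move=> <- a b ne; rewrite mxE (negbTE ne).
move=> H; apply/matrixP=> a b; rewrite mxE; case: eqP => // /eqP ne.
by rewrite H.
Qed.

Lemma inA_comm (X : M) : inA X <-> forall j, X *m Eb j = Eb j *m X.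
Proof.
rewrite inAE; split.
  move=> H j; apply/matrixP=> a b; rewrite mulEl mulEr.
  case: (eqVneq (blk a) (blk b)) => [->|ne]; first by rewrite mulrC.
  by rewrite H // mulr0 mul0r.
move=> H a b ne; have := congr1 (fun Z : M => Z a b) (H (blk b)).
by rewrite /= mulEl mulEr eqxx (negbTE ne) mulr1 mul0r.
Qed.

Lemma inA_phi (X : M) : inA (phi X).
Proof. by apply/inAE=> a b ne; rewrite mxE (negbTE ne). Qed.

Lemma inA1 : inA 1%:M.
Proof. by apply/inAE=> a b ne; rewrite mxE; case: (eqVneq a b) ne => [->|]; rewrite ?eqxx. Qed.

Lemma inAM (X Y : M) : inA X -> inA Y -> inA (X *m Y).
Proof.
move=> /inA_comm HX /inA_comm HY; apply/inA_comm=> j.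
by rewrite -mulmxA HY mulmxA HX mulmxA.
Qed.

Lemma inA_delta (i : 'I_m) : inA (delta_mx i i).
Proof.
apply/inAE=> a b ne; rewrite mxE; case: eqP => // ea; case: eqP => //= eb.
by move: ne; rewrite ea eb eqxx.
Qed.

Lemma phiD (X Y : M) : phi (X + Y) = phi X + phi Y.
Proof. by apply/matrixP=> a b; rewrite !mxE; case: ifP; rewrite ?addr0. Qed.

Lemma phiZ c (X : M) : phi (c *: X) = c *: phi X.
Proof. by apply/matrixP=> a b; rewrite !mxE; case: ifP; rewrite ?mulr0. Qed.

Lemma phi_sum (I : finType) (F : I -> M) : phi (\sum_i F i) = \sum_i phi (F i).
Proof.
apply/matrixP=> a b; rewrite mxE !summxE; case: ifP => h.
  by apply: eq_bigr => i _; rewrite mxE h.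
by rewrite big1 // => i _; rewrite mxE h.
Qed.

Lemma phi_sandwich (P X : M) : inA P -> phi (P *m X *m P) = P *m phi X *m P.
Proof.
move=> /inA_comm HP; rewrite !phiE mulmx_sumr mulmx_suml; apply: eq_bigr => j _.
by rewrite -!mulmxA HP !mulmxA HP.
Qed.

End Gen.

Lemma bdE (C : numClosedFieldType) d (n : 'I_d -> nat) (X : 'M[C]_(\sum_(i < d) n i)) :
  @blockdiag_part C d n X = phi (@tagnat.sig1 d n) X.
Proof.
apply/matrixP=> i j.
rewrite /blockdiag_part /mxdiag !mxE.
case: eqP => [e|_]; last by rewrite mxE.
have gen : forall (a b : 'I_d) (e : a = b) (s : 'I_(n a)) (t : 'I_(n b)),
   conform_mx 0 (submxblock X a a) s t = X (@tagnat.Rank d n a s) (@tagnat.Rank d n b t).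
  by move=> a b e' s t; subst b; rewrite conform_mx_id mxE.
by rewrite (gen _ _ e) !tagnat.sig2K.
Qed.

Lemma inAbd (C : numClosedFieldType) d (n : 'I_d -> nat) (X : 'M[C]_(\sum_(i < d) n i)) :
  @in_blockdiag C d n X <-> inA (@tagnat.sig1 d n) X.
Proof. by rewrite /in_blockdiag /inA bdE. Qed.


Section LinAlg.
Variable C : numClosedFieldType.

Definition subspace k (P : 'rV[C]_k -> Prop) :=
  [/\ P 0, (forall u v, P u -> P v -> P (u + v)) & (forall c v, P v -> P (c *: v))].

Lemma pred_mx k (P : 'rV[C]_k -> Prop) : subspace P ->
  exists W : 'M[C]_k, forall v, (v <= W)%MS <-> P v.
Proof.
case=> P0 PD PZ.
suff key : forall r (W : 'M[C]_k), (forall v, (v <= W)%MS -> P v) ->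
    (k - \rank W <= r)%N -> exists W : 'M[C]_k, forall v, (v <= W)%MS <-> P v.
  apply: (key k 0) => [v|]; last by rewrite leq_subr.
  by rewrite submx0 => /eqP ->.
elim=> [|r IH] W HW Hr.
  exists W => v; split; first exact: HW.
  move=> _; apply: submx_full; rewrite /row_full eqn_leq rank_leq_col /=.
  by rewrite -subn_eq0 -leqn0.
case: (classic (forall v, P v -> (v <= W)%MS)) => [H|].
  by exists W => v; split; [exact: HW | exact: H].
move=> /not_all_ex_not [v] H0; have [Pv nvW] := imply_to_and _ _ H0.
apply: (IH (W + v)%MS).
  move=> u /sub_addsmxP [[a b] ->] /=.
  apply: PD; first by apply: HW; apply: submxMl.
  by rewrite [b]mx11_scalar mul_scalar_mx; apply: PZ.
have Hs := mxrank_leqif_sup (addsmxSl W v).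
have lt : (\rank W < \rank (W + v)%MS)%N.
  case: Hs => le eq; rewrite ltn_neqAle le eq andbT; apply/negP=> H.
  by apply: nvW; apply: submx_trans (addsmxSr W v) H.
have := rank_leq_col (W + v)%MS; move: lt Hr; lia.
Qed.

Lemma adj_eq0 k l (Y : 'M[C]_(k,l)) : adjmx Y *m Y = 0 -> Y = 0.
Proof.
move=> H; have := @sum_adj_eq0 C _ _ 'I_1 (fun _ => Y).
by rewrite big_ord1 => /(_ H ord0).
Qed.

Lemma orthoproj_free r k (B : 'M[C]_(r, k)) : row_free B -> exists Q : 'M[C]_k,
  [/\ adjmx Q = Q, Q *m Q = Q, (Q <= B)%MS &
      forall l (A : 'M[C]_(l, k)), (A <= B)%MS -> A *m Q = A].
Proof.
move=> Bfree.
set G := B *m adjmx B.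
have Gu : G \in unitmx.
  rewrite -row_free_unit -kermx_eq0; apply/eqP/row_matrixP=> i.
  rewrite row0; set x := row i (kermx G).
  have xG : x *m G = 0 by rewrite /x -row_mul mulmx_ker row0.
  have : (x *m B) *m adjmx (x *m B) = 0.
    by rewrite adjmxM mulmxA -(mulmxA x) xG mul0mx.
  rewrite -{1}(adjmxK (x *m B)) => /adj_eq0 H.
  have : x *m B = 0 by rewrite -(adjmxK (x *m B)) H adjmx0.
  by move/eqP; rewrite mulmx_free_eq0 // => /eqP.
have adjG : adjmx G = G by rewrite /G adjmxM adjmxK.
exists (adjmx B *m invmx G *m B); split.
- by rewrite adjmxM adjmxM adjmxK adjmx_invmx adjG mulmxA.
- rewrite -!mulmxA (mulmxA B (adjmx B)) -/G (mulmxA (invmx G) G) mulVmx //.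
  by rewrite mul1mx.
- by rewrite submxMl.
- move=> l A /mulmxKpV <-.
  rewrite -!mulmxA (mulmxA B (adjmx B)) -/G (mulmxA G (invmx G)) mulmxV //.
  by rewrite mul1mx.
Qed.

Lemma orthoproj k (W : 'M[C]_k) : exists Q : 'M[C]_k,
  [/\ adjmx Q = Q, Q *m Q = Q, (Q <= W)%MS &
      forall l (A : 'M[C]_(l, k)), (A <= W)%MS -> A *m Q = A].
Proof.
have [Q [h1 h2 h3 h4]] := orthoproj_free (row_base_free W).
exists Q; split => //; first by rewrite -(eq_row_base W).
by move=> l A; rewrite -(eq_row_base W); apply: h4.
Qed.

Lemma stable_eigen k (T Mx : 'M[C]_k) : T != 0 -> (T *m Mx <= T)%MS ->
  exists w : 'rV[C]_k, exists l : C, [/\ (w <= T)%MS, w != 0 & w *m Mx = l *: w].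
Proof.
move=> T0 sT.
set B := row_base T.
have BM : (B *m Mx <= B)%MS.
  rewrite /B (eq_row_base T); apply: submx_trans sT.
  by apply: submxMr; rewrite eq_row_base.
set Mr := B *m Mx *m pinvmx B.
have eBM : B *m Mx = Mr *m B by rewrite /Mr mulmxKpV.
have r0 : \rank T != 0%N by rewrite mxrank_eq0.
have [l rl] : exists l, root (char_poly Mr) l.
  by apply/closed_rootP; rewrite size_char_poly eqSS.
move: rl; rewrite -eigenvalue_root_char => /eigenvalueP [y yM y0].
exists (y *m B), l; split.
- by apply: submx_trans (submxMl y B) _; rewrite /B eq_row_base.
- by rewrite mulmx_free_eq0 // row_base_free.
- by rewrite -mulmxA eBM mulmxA yM scalemxAl.
Qed.

End LinAlg.


Section Burnside.
Variable C : numClosedFieldType.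

Lemma ex_nzrow k l (T : 'M[C]_(k, l)) : T != 0 -> exists i, row i T != 0.
Proof.
move=> T0; case: (pickP (fun i => row i T != 0)) => [i h|h]; first by exists i.
move: T0; have -> : T = 0; last by rewrite eqxx.
by apply/row_matrixP => i; rewrite row0; move: (h i) => /negbFE /eqP.
Qed.

Lemma rowZ' k l (T : 'M[C]_(k, l)) i (a : C) : row i (a *: T) = a *: row i T.
Proof. by apply/rowP => j; rewrite !mxE. Qed.

Lemma burnside k (I : finType) (K : I -> 'M[C]_k) :
  (forall P : 'rV[C]_k -> Prop, subspace P -> (forall v i, P v -> P (v *m K i)) ->
      (forall v, P v) \/ (forall v, P v -> v = 0)) ->
  forall S : 'M[C]_k -> Prop, S 1%:M -> (forall x y, S x -> S y -> S (x + y)) ->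
    (forall x y, S x -> S y -> S (x *m y)) -> (forall c x, S x -> S (c *: x)) ->
    (forall i, S (K i)) -> forall X, S X.
Proof.
move=> NI S S1 SD SM SZ SK.
have S0 : S 0 by rewrite -(scale0r 1%:M); apply: SZ.
have SB : forall x y, S x -> S y -> S (x - y).
  by move=> x y Sx Sy; apply: SD => //; rewrite -scaleN1r; apply: SZ.
have Ssum : forall (J : finType) (F : J -> 'M_k), (forall j, S (F j)) -> S (\sum_j F j).
  by move=> J F HF; apply: big_ind => //.
have RT : forall x : 'rV_k, x != 0 -> forall y, exists B, S B /\ x *m B = y.
  move=> x x0 y.
  pose P v := exists B, S B /\ v = x *m B.
  have sP : subspace P.
    split.
    - by exists 0; split => //; rewrite mulmx0.
    - move=> u v [B1 [SB1 ->]] [B2 [SB2 ->]]; exists (B1 + B2); split.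
        exact: SD.
      by rewrite mulmxDr.
    - by move=> c v [B1 [SB1 ->]]; exists (c *: B1); split; [apply: SZ | rewrite scalemxAr].
  have iP : forall v i, P v -> P (v *m K i).
    by move=> v i [B1 [SB1 ->]]; exists (B1 *m K i); split; [apply: SM | rewrite mulmxA].
  case: (NI P sP iP) => [H|H].
    by have [B [SB' e]] := H y; exists B; split.
  have : P x by exists 1%:M; split => //; rewrite mulmx1.
  by move/H => e; rewrite e eqxx in x0.
case: (posnP k) => [k0|kpos].
  move=> X; have -> : X = 1%:M by apply/matrixP => i; have := ltn_ord i; rewrite {2}k0.
  exact: S1.
have Rk1 : exists T, [/\ S T, T != 0 & \rank T = 1%N].
  suff gen : forall r T, S T -> T != 0 -> (\rank T <= r)%N ->
      exists T, [/\ S T, T != 0 & \rank T = 1%N].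
    apply: (gen k 1%:M) => //; last by rewrite rank_leq_col.
    apply/eqP => /matrixP /(_ (Ordinal kpos) (Ordinal kpos)); rewrite !mxE eqxx /=.
    by move/eqP; rewrite oner_eq0.
  elim=> [|r IH] T ST T0 Tr.
    by move: Tr; rewrite leqn0 mxrank_eq0 (negbTE T0).
  case: (eqVneq (\rank T) 1%N) => [T1|T1]; first by exists T.
  have [i wi] := ex_nzrow T0.
  have [j wj] : exists j, ~~ (row j T <= row i T)%MS.
    case: (pickP (fun j => ~~ (row j T <= row i T)%MS)) => [j h|h]; first by exists j.
    have sT : (T <= row i T)%MS by apply/row_subP => j; move: (h j) => /negbFE.
    have := mxrankS sT; have := rank_leq_row (row i T).
    have : \rank T != 0%N by rewrite mxrank_eq0.
    move: T1; lia.
  have [A [SA eA]] := RT _ wi (delta_mx 0 j).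
  set Mx := A *m T.
  have sT : (T *m Mx <= T)%MS by rewrite /Mx mulmxA submxMl.
  have [w [l [wT w0 wM]]] := stable_eigen T0 sT.
  set T' := T *m Mx - l *: T.
  have ST' : S T'.
    by apply: SB; [exact: (SM _ _ ST (SM _ _ SA ST)) | exact: SZ].
  have eT' : T' = T *m (Mx - l%:M) by rewrite mulmxBr mul_mx_scalar.
  have lt : (\rank T' < \rank T)%N.
    have := mxrank_mul_ker T (Mx - l%:M); rewrite -eT' => <-.
    have : (w <= T :&: kermx (Mx - l%:M))%MS.
      rewrite sub_capmx wT /=; apply/sub_kermxP.
      by rewrite mulmxBr wM mul_mx_scalar subrr.
    move/mxrankS; have : \rank w != 0%N by rewrite mxrank_eq0.
    lia.
  have T'0 : T' != 0.
    apply/eqP => eq0; move: wj; apply/negP/negPn.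
    have : row i T *m Mx = l *: row i T.
      rewrite -row_mul -rowZ'; congr (row i _); apply/eqP.
      by rewrite -subr_eq0 -/T' eq0.
    rewrite /Mx mulmxA eA -rowE => ->; exact: scalemx_sub.
  apply: (IH T') => //; move: lt Tr; lia.
have [T [ST T0 T1]] := Rk1.
have [u [w [eT w0 u0]]] : exists (u : 'cV_k) (w : 'rV_k), [/\ T = u *m w, w != 0 & u != 0].
  have gen : forall r (Cb : 'M_(k, r)) (Rb : 'M_(r, k)), r = 1%N -> Cb *m Rb = T ->
      exists (u : 'cV_k) (w : 'rV_k), [/\ T = u *m w, w != 0 & u != 0].
    move=> r Cb Rb er; subst r => e; exists Cb, Rb; split => //.
      by apply/eqP => e0; move: T0; rewrite -e e0 mulmx0 eqxx.
    by apply/eqP => e0; move: T0; rewrite -e e0 mul0mx eqxx.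
  exact: gen (col_base T) (row_base T) T1 (mulmx_base T).
pose L (c : 'cV_k) := forall y : 'rV_k, S (c *m y).
have Lu : L u.
  move=> y; have [B [SB' eB]] := RT w w0 y.
  by rewrite -eB mulmxA -eT; apply: SM.
have LK : forall c i, L c -> L (K i *m c).
  by move=> c i Lc y; rewrite -mulmxA; apply: SM.
pose W (v : 'rV_k) := forall c, L c -> v *m c = 0.
have sW : subspace W.
  split.
  - by move=> c _; rewrite mul0mx.
  - by move=> a b Wa Wb c Lc; rewrite mulmxDl Wa ?Wb ?addr0.
  - by move=> a v Wv c Lc; rewrite -scalemxAl Wv ?scaler0.
have iW : forall v i, W v -> W (v *m K i).
  by move=> v i Wv c Lc; rewrite -mulmxA; apply: Wv; apply: LK.
have Wz : forall v, W v -> v = 0.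
  case: (NI W sW iW) => // H; exfalso.
  have [a ua] := ex_nzrow u0.
  have := H (delta_mx 0 a) u Lu; rewrite -rowE => e.
  by move: ua; rewrite e eqxx.
have Lall : forall c, L c.
  pose Lt (v : 'rV_k) := L v^T.
  have sLt : subspace Lt.
    split.
    - by move=> y; rewrite trmx0 mul0mx.
    - by move=> a b La Lb y; rewrite linearD /= mulmxDl; apply: SD.
    - by move=> a v Lv y; rewrite linearZ /= -scalemxAl; apply: SZ.
  have [Lm HLm] := pred_mx sLt.
  case: (eqVneq (\rank Lm) k) => [full|nfull].
    move=> c; have : Lt c^T by apply/HLm; apply: submx_full; rewrite /row_full full.
    by rewrite /Lt trmxK.
  exfalso.
  have kp : (0 < \rank (kermx Lm^T))%N.
    rewrite mxrank_ker mxrank_tr subn_gt0 ltn_neqAle nfull rank_leq_col //.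
  have [z z0] : exists z, row z (kermx Lm^T) != 0.
    by apply: ex_nzrow; rewrite -mxrank_eq0 -lt0n.
  apply: (negP z0); apply/eqP; apply: Wz => c Lc.
  have : (c^T <= Lm)%MS by apply/HLm; rewrite /Lt trmxK.
  move/submxP => [D eD].
  have -> : c = Lm^T *m D^T by rewrite -trmx_mul -eD trmxK.
  by rewrite mulmxA -row_mul mulmx_ker row0 mul0mx.
move=> X; rewrite (matrix_sum_delta X); apply: (Ssum) => a; apply: (Ssum) => b; apply: (SZ).
have -> : delta_mx a b = (delta_mx a 0 : 'cV_k) *m (delta_mx 0 b : 'rV_k).
  by symmetry; apply: mul_delta_mx.
exact: Lall.
Qed.

End Burnside.


Section Choi.
Variable C : numClosedFieldType.
Variable m : nat.

Local Notation RK := (@tagnat.Rank m (fun _ => m)).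
Local Notation S1 := (@tagnat.sig1 m (fun _ => m)).
Local Notation S2 := (@tagnat.sig2 m (fun _ => m)).

Lemma sig2_Rank a (i : 'I_m) : S2 (RK a i) = i.
Proof. by apply: val_inj; rewrite tagnat.Rank2K. Qed.

Lemma Rank_sig (s : 'I_(\sum_(a < m) m)) : RK (S1 s) (S2 s) = s.
Proof. exact: tagnat.sig2K. Qed.

Lemma mxblock_entry (B : 'I_m -> 'I_m -> 'M[C]_m) a b i j :
  (\mxblock_(a0 < m, b0 < m) B a0 b0) (RK a i) (RK b j) = B a b i j.
Proof.
rewrite mxE.
have h : forall s t, S1 s = a -> S1 t = b -> S2 s = i -> S2 t = j ->
   B (S1 s) (S1 t) (S2 s) (S2 t) = B a b i j.
  by move=> s t -> -> -> ->.
by apply: h; rewrite ?tagnat.Rank1K ?sig2_Rank.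
Qed.

End Choi.

Section Choi2.
Variable C : numClosedFieldType.

Lemma delta_sandwich k l r (A : 'M[C]_(k, l)) (B : 'M[C]_(l, r)) a b i j :
  (A *m delta_mx a b *m B) i j = A i a * B b j.
Proof.
have -> : delta_mx a b = (delta_mx a 0 : 'cV[C]_l) *m (delta_mx 0 b : 'rV[C]_l).
  by symmetry; apply: mul_delta_mx.
rewrite mulmxA -colE -mulmxA -rowE mxE big_ord1 !mxE //.
Qed.

Lemma sandwich_lin k l r (A : 'M[C]_(k, l)) (X : 'M[C]_l) (B : 'M[C]_(l, r)) :
  A *m X *m B = \sum_(a < l) \sum_(b < l) X a b *: (A *m delta_mx a b *m B).
Proof.
rewrite {1}(matrix_sum_delta X) mulmx_sumr mulmx_suml; apply: eq_bigr => a _.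
rewrite mulmx_sumr mulmx_suml; apply: eq_bigr => b _.
by rewrite -scalemxAr -scalemxAl.
Qed.

Variable m : nat.
Local Notation RK := (@tagnat.Rank m (fun _ => m)).

Definition Kr (Z : 'M[C]_(\sum_(a < m) m)) (r : 'I_(\sum_(a < m) m)) : 'M[C]_m :=
  \matrix_(b, t) Z r (RK b t).

Lemma choi_kraus (f : 'M[C]_m -> 'M[C]_m)
  (hlin : forall X, f X = \sum_(a < m) \sum_(b < m) X a b *: f (delta_mx a b))
  (Z : 'M[C]_(\sum_(a < m) m))
  (HZ : \mxblock_(a < m, b < m) f (delta_mx a b) = adjmx Z *m Z) :
  forall X, f X = \sum_r adjmx (Kr Z r) *m X *m Kr Z r.
Proof.
move=> X; apply/matrixP => i j.
rewrite hlin (summxE _ _ (fun r => adjmx (Kr Z r) *m X *m Kr Z r)).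
rewrite (eq_bigr (fun r => \sum_(a < m) \sum_(b < m)
     X a b * ((Z r (RK a i))^* * Z r (RK b j)))); last first.
  move=> r _; rewrite sandwich_lin summxE; apply: eq_bigr => a _.
  rewrite summxE; apply: eq_bigr => b _.
  by rewrite mxE delta_sandwich adjmxE !mxE.
rewrite (summxE _ _ (fun a => \sum_(b < m) X a b *: f (delta_mx a b))).
rewrite [RHS]exchange_big /=; apply: eq_bigr => a _.
rewrite (summxE _ _ (fun b => X a b *: f (delta_mx a b))).
rewrite [RHS]exchange_big /=; apply: eq_bigr => b _.
rewrite mxE -mulr_sumr; congr (_ * _).
rewrite -(mxblock_entry (fun a0 b0 => f (delta_mx a0 b0))) HZ mxE.
by apply: eq_bigr => r _; rewrite adjmxE.
Qed.

End Choi2.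

Section ChoiIn.
Variable C : numClosedFieldType.
Variables (m d : nat) (blk : 'I_m -> 'I_d) (rep : 'I_d -> 'I_m).
Hypothesis blk_rep : forall j, blk (rep j) = j.
Local Notation RK := (@tagnat.Rank m (fun _ => m)).
Local Notation S1 := (@tagnat.sig1 m (fun _ => m)).
Local Notation S2 := (@tagnat.sig2 m (fun _ => m)).

Lemma choi_in : psdmx (\mxblock_(a < m, b < m) phi blk (delta_mx a b : 'M[C]_m)).
Proof.
pose R (j : 'I_d) := RK (rep j) (rep j).
have Rinj : forall x y, (R x == R y) = (x == y).
  move=> x y; apply/eqP/eqP => [e|->] //.
  have := congr1 S1 e; rewrite !tagnat.Rank1K => /(congr1 blk).
  by rewrite !blk_rep.
exists (\matrix_(r, t) ((r == R (blk (S1 t))) && (S2 t == S1 t))%:R).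
apply/matrixP => s t; rewrite -(Rank_sig s) -(Rank_sig t).
move: (S1 s) (S2 s) (S1 t) (S2 t) => a i b j.
rewrite mxblock_entry mxE [RHS]mxE.
rewrite (eq_bigr (fun r => ((r == R (blk a)) && (i == a))%:R *
                           ((r == R (blk b)) && (j == b))%:R)); last first.
  move=> r _; rewrite adjmxE !mxE !tagnat.Rank1K !sig2_Rank.
  by case: (_ && _); rewrite ?rmorph1 ?rmorph0.
rewrite mxE; case: (eqVneq i a) => [->|ia]; last first.
  rewrite big1 /=; last by move=> r _; rewrite andbF mul0r.
  by case: ifP => // _; rewrite mxE (negbTE ia).
case: (eqVneq j b) => [->|jb]; last first.
  rewrite big1 /=; last by move=> r _; rewrite andbF mulr0.
  by case: ifP => // _; rewrite mxE (negbTE jb) andbF.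
rewrite (eq_bigr (fun r => ((r == R (blk a)) && (r == R (blk b)))%:R)); last first.
  by move=> r _; rewrite !andbT; case: (r == _); case: (r == _);
     rewrite ?mulr1 ?mulr0 ?mul0r.
rewrite (bigD1 (R (blk a)) (F := fun r => ((r == R (blk a)) && (r == R (blk b)))%:R)) //=.
rewrite [X in _ + X]big1 ?addr0; last by move=> r /negbTE ->.
by rewrite eqxx /= eq_sym Rinj eq_sym; case: (blk a == blk b).
Qed.

End ChoiIn.


Section GenProj.
Variable C : numClosedFieldType.

Definition irr k (B : 'M[C]_k -> Prop) (f : 'M[C]_k -> 'M[C]_k) : Prop :=
  ~ exists P : 'M[C]_k,
      [/\ B P, projmx P, P <> 0, P <> 1%:M &
          forall X, B X -> exists Y, B Y /\ f (P *m X *m P) = P *m Y *m P].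

Lemma gen_proj k p (A : 'I_p -> 'M[C]_k) (P Y : 'M[C]_k) :
  generates_full A -> projmx P ->
  \sum_i adjmx (A i) *m P *m A i = P *m Y *m P -> P = 0 \/ P = 1%:M.
Proof.
move=> gA [aP PP] H.
set Q := 1%:M - P.
have aQ : adjmx Q = Q by rewrite /Q adjmxB adjmx1 aP.
have PQ : P *m Q = 0 by rewrite /Q mulmxBr mulmx1 PP subrr.
have QP : Q *m P = 0 by rewrite /Q mulmxBl mul1mx PP subrr.
have PQ1 : P + Q = 1%:M by rewrite /Q addrC subrK.
clearbody Q.
have PA0 : forall i, P *m A i *m Q = 0.
  apply: sum_adj_eq0.
  transitivity (Q *m (\sum_i adjmx (A i) *m P *m A i) *m Q).
    rewrite mulmx_sumr mulmx_suml; apply: eq_bigr => i _.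
    rewrite !adjmxM aQ aP !mulmxA; congr (_ *m _).
    by rewrite -!mulmxA (mulmxA P P) PP.
  by rewrite H !mulmxA QP !mul0mx.
have key : forall X, P *m X *m Q = 0.
  apply: (gA (fun X => P *m X *m Q = 0)).
  - by rewrite mulmx1.
  - by move=> x y hx hy; rewrite mulmxDr mulmxDl hx hy addr0.
  - move=> x y hx hy.
    have -> : P *m (x *m y) *m Q = P *m x *m (P + Q) *m y *m Q.
      by rewrite PQ1 mulmx1 !mulmxA.
    rewrite mulmxDr mulmxDl mulmxDl hx !mul0mx addr0.
    by rewrite -!mulmxA (mulmxA P y) hy mulmx0 mulmx0.
  - by move=> c x hx; rewrite -scalemxAr -scalemxAl hx scaler0.
  - exact: PA0.
case: (eqVneq P 0) => [->|P0]; first by left.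
right; have [r /eqP rP] := ex_nzrow P0.
have [a Pra] : exists a, P r a != 0.
  case: (pickP (fun a => P r a != 0)) => [a h|h]; first by exists a.
  by case: rP; apply/rowP => a; rewrite !mxE; move: (h a) => /negbFE /eqP.
suff Q0 : Q = 0 by rewrite -PQ1 Q0 addr0.
apply/matrixP => b s; have := congr1 (fun Z : 'M[C]_k => Z r s) (key (delta_mx a b)).
rewrite /= delta_sandwich mxE => /eqP; rewrite mulf_eq0 (negbTE Pra) /=.
by move/eqP ->; rewrite mxE.
Qed.

Lemma irr_ext k (B B' : 'M[C]_k -> Prop) f g :
  (forall X, B X <-> B' X) -> (forall X, f X = g X) -> irr B f -> irr B' g.
Proof.
move=> hB hf H [P [BP pP P0 P1 HP]]; apply: H; exists P; split => //.
  by apply/hB.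
move=> X /hB /HP [Y [BY e]]; exists Y; split; first by apply/hB.
by rewrite hf.
Qed.

End GenProj.


Section Reindex.
Variable C : numClosedFieldType.

Lemma reindex_kraus k (I : finType) (F : I -> 'M[C]_k) :
  (forall S : 'M[C]_k -> Prop, S 1%:M -> (forall x y, S x -> S y -> S (x + y)) ->
    (forall x y, S x -> S y -> S (x *m y)) -> (forall c x, S x -> S (c *: x)) ->
    (forall i, S (F i)) -> forall X, S X) ->
  exists p (A : 'I_p -> 'M[C]_k), generates_full A /\
    forall X, \sum_i adjmx (F i) *m X *m F i = \sum_(i < p) adjmx (A i) *m X *m A i.
Proof.
move=> H; exists #|I|, (fun i => F (enum_val i)); split.
  move=> S S1 SD SM SZ SA; apply: H => // i.
  by rewrite -(enum_rankK i); apply: SA.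
move=> X; rewrite (big_enum_val (fun i => adjmx (F i) *m X *m F i)) /=.
by apply: eq_bigl => i.
Qed.

End Reindex.

Section Main.
Variable C : numClosedFieldType.
Variables (m d : nat) (blk : 'I_m -> 'I_d) (rep : 'I_d -> 'I_m).
Hypothesis blk_rep : forall j, blk (rep j) = j.
Variable tau : {linear 'M[C]_m -> 'M[C]_m}.
Hypothesis tau_A : forall X, inA blk X -> inA blk (tau X).
Local Notation M := 'M[C]_m.
Local Notation tauT := (fun X : M => tau (phi blk X)).
Local Notation Eb := (@Eb C _ _ blk).

Lemma L21 : irr (fun _ => True) tauT -> irr (inA blk) tau.
Proof.
move=> H [P [AP pP P0 P1 HP]]; apply: H; exists P; split => // X _.
have [Y [AY e]] := HP (phi blk X) (inA_phi blk X).
by exists Y; split => //=; rewrite phi_sandwich.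
Qed.

Lemma L41 : (exists p (A : 'I_p -> M), generates_full A /\
   forall X, inA blk X -> tau X = \sum_(i < p) adjmx (A i) *m X *m A i) ->
  irr (inA blk) tau.
Proof.
move=> [p [A [gA hA]]] [P [AP pP P0 P1 HP]].
have [Y [_ e]] := HP 1%:M (inA1 C blk).
have : \sum_i adjmx (A i) *m P *m A i = P *m Y *m P.
  by rewrite -hA // -e mulmx1 pP.2.
by case/(gen_proj gA pP).
Qed.

Lemma L32 : (exists p (A : 'I_p -> M), generates_full A /\
   forall X, tauT X = \sum_(i < p) adjmx (A i) *m X *m A i) ->
  irr (fun _ => True) tauT.
Proof.
move=> [p [A [gA hA]]] [P [_ pP P0 P1 HP]].
have [Y [_ e]] := HP 1%:M I.
have : \sum_i adjmx (A i) *m P *m A i = P *m Y *m P.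
  by rewrite -hA -e mulmx1 pP.2.
by case/(gen_proj gA pP).
Qed.

Lemma L34 : (exists p (A : 'I_p -> M), generates_full A /\
   forall X, tauT X = \sum_(i < p) adjmx (A i) *m X *m A i) ->
  (exists p (A : 'I_p -> M), generates_full A /\
   forall X, inA blk X -> tau X = \sum_(i < p) adjmx (A i) *m X *m A i).
Proof.
move=> [p [A [gA hA]]]; exists p, A; split => // X AX.
by rewrite -hA /= AX.
Qed.

End Main.


Section Main2.
Variable C : numClosedFieldType.
Variables (m d : nat) (blk : 'I_m -> 'I_d).
Variable tau : {linear 'M[C]_m -> 'M[C]_m}.
Hypothesis tau_A : forall X, inA blk X -> inA blk (tau X).
Local Notation M := 'M[C]_m.
Local Notation tauT := (fun X : M => tau (phi blk X)).
Local Notation Eb := (@Eb C _ _ blk).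

Lemma reduce (I : finType) (L : I -> M)
  (hL : forall X, tauT X = \sum_x adjmx (L x) *m X *m L x)
  (W : 'rV[C]_m -> Prop) : subspace W ->
  (forall v x, W v -> W (v *m L x)) -> (forall v j, W v -> W (v *m Eb j)) ->
  (exists v0, W v0 /\ v0 != 0) -> (exists y, ~ W y) -> ~ irr (inA blk) tau.
Proof.
move=> sW iW eW [v0 [Wv0 v00]] [y Wy] Hirr; apply: Hirr.
have [Wm HWm] := pred_mx sW.
have [Q [aQ QQ QW QA]] := orthoproj Wm.
have subW : forall N : M, (forall v, W v -> W (v *m N)) -> (Q *m N <= Wm)%MS.
  move=> N hN; apply/row_subP => i; rewrite row_mul; apply/HWm; apply: hN.
  by apply/HWm; exact: submx_trans (row_sub i Q) QW.
have QNQ : forall N : M, (forall v, W v -> W (v *m N)) -> Q *m N *m Q = Q *m N.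
  by move=> N hN; apply: QA; apply: subW.
have comm : forall N : M, adjmx N = N -> (forall v, W v -> W (v *m N)) ->
    N *m Q = Q *m N.
  move=> N aN hN; have e := QNQ N hN.
  have := congr1 (@adjmx C m m) e; rewrite !adjmxM aQ aN -e.
  by rewrite !mulmxA.
have AQ : inA blk Q.
  apply/inA_comm => j; symmetry; apply: comm; first exact: adjEb.
  by move=> v; apply: eW.
have h1 : forall x, adjmx (L x) *m Q = Q *m adjmx (L x) *m Q.
  move=> x; have := congr1 (@adjmx C m m) (QNQ (L x) (fun v => iW v x)).
  by rewrite !adjmxM aQ mulmxA => ->.
exists Q; split => //.
- move=> Q0; have e := QA _ v0 (proj2 (HWm v0) Wv0); move: v00.
  by rewrite -e Q0 mulmx0 eqxx.
- move=> Q1; apply: Wy; apply/HWm; rewrite -(mulmx1 y) -Q1.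
  exact: submx_trans (submxMl y Q) QW.
move=> X AX; exists (tau (Q *m X *m Q)); split.
  by apply: tau_A; apply: inAM => //; apply: inAM.
have e : tau (Q *m X *m Q) = tauT (Q *m X *m Q).
  by rewrite /=; congr (tau _); symmetry; apply: inAM => //; apply: inAM.
rewrite e hL mulmx_sumr mulmx_suml; apply: eq_bigr => x _.
transitivity ((Q *m adjmx (L x) *m Q) *m X *m (Q *m L x *m Q)).
  by rewrite (QNQ (L x) (fun v => iW v x)) -h1 !mulmxA.
by rewrite !mulmxA.
Qed.

Lemma zero_case : (forall X, tauT X = 0) ->
  forall W : 'rV[C]_m -> Prop, subspace W ->
  (exists v0, W v0 /\ v0 != 0) -> (exists y, ~ W y) -> ~ irr (inA blk) tau.
Proof.
move=> h0 W [W0 WD WZ] [v0 [Wv0 v00]] [y Wy] Hirr; apply: Hirr.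
have [t vt] : exists t, v0 0 t != 0.
  case: (pickP (fun t => v0 0 t != 0)) => [t h|h]; first by exists t.
  exfalso; move/eqP: v00; apply; apply/rowP => t; rewrite mxE.
  by move: (h t) => /negbFE /eqP.
have [t' tt'] : exists t', t' != t.
  case: (pickP (fun t' : 'I_m => t' != t)) => [t' h|h]; first by exists t'.
  exfalso; apply: Wy.
  have -> : y = (y 0 t / v0 0 t) *: v0; last exact: WZ.
  apply/rowP => s; have /negbFE /eqP -> := h s.
  by rewrite mxE divfK.
exists (delta_mx t t); split.
- exact: inA_delta.
- split; last by rewrite mul_delta_mx.
  apply/matrixP => a b; rewrite adjmxE !mxE.
  by case: (b == t); case: (a == t); rewrite /= ?rmorph0 ?rmorph1.
- move/matrixP/(_ t t); rewrite !mxE !eqxx /= => /eqP; by rewrite oner_eq0.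
- move/matrixP/(_ t' t'); rewrite !mxE !eqxx (negbTE tt') /= => /eqP.
  by rewrite eq_sym oner_eq0.
move=> X AX; exists 0; split.
  by apply/inAE => a b _; rewrite mxE.
have e : tau (delta_mx t t *m X *m delta_mx t t) = tauT (delta_mx t t *m X *m delta_mx t t).
  rewrite /=; congr (tau _); symmetry; apply: inAM; last exact: inA_delta.
  by apply: inAM => //; exact: inA_delta.
by rewrite e h0 mulmx0 mul0mx.
Qed.

Lemma L13 (Z : 'M[C]_(\sum_(a < m) m))
  (HZ : \mxblock_(a < m, b < m) tau (phi blk (delta_mx a b)) = adjmx Z *m Z) :
  irr (inA blk) tau -> exists p (A : 'I_p -> M), generates_full A /\
     forall X, tauT X = \sum_(i < p) adjmx (A i) *m X *m A i.
Proof.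
move=> Hirr.
have hlin : forall X : M, tauT X = \sum_(a < m) \sum_(b < m) X a b *: tauT (delta_mx a b).
  move=> X /=; rewrite {1}(matrix_sum_delta X) phi_sum linear_sum.
  apply: eq_bigr => a _; rewrite phi_sum linear_sum; apply: eq_bigr => b _.
  by rewrite phiZ linearZ.
have kraus := choi_kraus hlin HZ.
set K := Kr Z in kraus.
pose Lp (x : ('I_(\sum_(a < m) m) * 'I_d) * 'I_d) := Eb x.1.2 *m K x.1.1 *m Eb x.2.
have hL : forall X, tauT X = \sum_x adjmx (Lp x) *m X *m Lp x.
  move=> X.
  have e1 : tauT X = phi blk (tauT (phi blk X)).
    have pp : phi blk (phi blk X) = phi blk X := inA_phi blk X.
    by rewrite /= pp; symmetry; apply: tau_A; apply: inA_phi.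
  rewrite e1 kraus [phi blk X]phiE phiE.
  transitivity (\sum_(l < d) \sum_r \sum_(j < d) adjmx (Lp ((r, j), l)) *m X *m Lp ((r, j), l)).
    apply: eq_bigr => l _; rewrite !(mulmx_sumr, mulmx_suml); apply: eq_bigr => r _.
    rewrite !(mulmx_sumr, mulmx_suml); apply: eq_bigr => j _.
    by rewrite /Lp /= !adjmxM !adjEb !mulmxA.
  rewrite exchange_big /=.
  transitivity (\sum_r \sum_(j < d) \sum_(l < d) adjmx (Lp ((r, j), l)) *m X *m Lp ((r, j), l)).
    by apply: eq_bigr => r _; rewrite exchange_big.
  rewrite (pair_bigA _ (fun r j => \sum_(l < d) adjmx (Lp ((r, j), l)) *m X *m Lp ((r, j), l))).
  rewrite (pair_bigA _ (fun rj l => adjmx (Lp (rj, l)) *m X *m Lp (rj, l))).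
  by apply: eq_bigr => -[[r j] l] _.
have Gen : forall S : M -> Prop, S 1%:M -> (forall x y, S x -> S y -> S (x + y)) ->
    (forall x y, S x -> S y -> S (x *m y)) -> (forall c x, S x -> S (c *: x)) ->
    (forall i, S (Lp i)) -> forall X, S X.
  apply: burnside => V sV iV.
  case: (classic (forall v, V v)) => [h|hnall]; first by left.
  case: (classic (forall v, V v -> v = 0)) => [h|hnz]; first by right.
  exfalso.
  have [y Vy] : exists y, ~ V y by apply: not_all_ex_not.
  have [v0 [Vv0 v00]] : exists v0, V v0 /\ v0 != 0.
    have [v0 H0] := not_all_ex_not _ _ hnz.
    have [a b] := imply_to_and _ _ H0; exists v0; split => //; exact/eqP.
  case: (sV) => V0 VD VZ.
  pose U u := forall j, exists v, V v /\ u *m Eb j = v *m Eb j.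
  pose U' u := forall j, V (u *m Eb j).
  have EL : forall x, Eb x.1.2 *m Lp x = Lp x.
    by move=> x; rewrite /Lp !mulmxA EbEb_same.
  have LE : forall x k, Lp x *m Eb k = if x.2 == k then Lp x else 0.
    by move=> x k; rewrite /Lp -mulmxA EbEb; case: eqP => _; rewrite ?mulmx0.
  have VuL : forall u x, (exists v, V v /\ u *m Eb x.1.2 = v *m Eb x.1.2) ->
      V (u *m Lp x).
    move=> u x [v [Vv e]]; rewrite -EL mulmxA e -mulmxA EL; exact: iV.
  have sU : subspace U.
    split.
    - by move=> j; exists 0; split => //; rewrite !mul0mx.
    - move=> u1 u2 h1 h2 j; have [v1 [V1 e1]] := h1 j; have [v2 [V2 e2]] := h2 j.
      by exists (v1 + v2); split; [exact: VD | rewrite !mulmxDl e1 e2].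
    - move=> c u h j; have [v [Vv e]] := h j.
      by exists (c *: v); split; [exact: VZ | rewrite -!scalemxAl e].
  have iU : forall u x, U u -> U (u *m Lp x).
    by move=> u x h j; exists (u *m Lp x); split => //; apply: VuL.
  have eU : forall u k, U u -> U (u *m Eb k).
    move=> u k h j; rewrite -mulmxA EbEb; case: eqP => [<-|_]; first exact: h.
    by exists 0; split => //; rewrite mulmx0 mul0mx.
  have VU : forall v, V v -> U v by move=> v Vv j; exists v.
  have sU' : subspace U'.
    split.
    - by move=> j; rewrite mul0mx.
    - by move=> u1 u2 h1 h2 j; rewrite mulmxDl; apply: VD.
    - by move=> c u h j; rewrite -scalemxAl; apply: VZ.
  have iU' : forall u x, U' u -> U' (u *m Lp x).
    move=> u x h k; rewrite -mulmxA LE; case: eqP => _; last by rewrite mulmx0.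
    by rewrite -EL mulmxA; apply: iV; apply: h.
  have eU' : forall u k, U' u -> U' (u *m Eb k).
    move=> u k h j; rewrite -mulmxA EbEb; case: eqP => _; first exact: h.
    by rewrite mulmx0.
  have U'V : forall u, U' u -> V u.
    move=> u h; have -> : u = \sum_j u *m Eb j by rewrite -mulmx_sumr sumEb mulmx1.
    by apply: big_ind => // j _; apply: h.
  case: (classic (forall u, U u)) => [Uall|Unot].
    case: (classic (forall u, U' u -> u = 0)) => [U'z|U'nz].
      have L0 : forall x, Lp x = 0.
        move=> x; apply/row_matrixP => i; rewrite row0 rowE; apply: U'z.
        move=> k; rewrite -mulmxA LE; case: eqP => _; last by rewrite mulmx0.
        by apply: VuL; apply: Uall.
      have h0 : forall X, tauT X = 0.
        by move=> X; rewrite hL big1 // => x _; rewrite L0 mulmx0.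
      apply: (zero_case h0 sV _ _ Hirr).
        by exists v0.
      by exists y.
    have [u0 hu0] := not_all_ex_not _ _ U'nz.
    have [U'u0 u00] := imply_to_and _ _ hu0.
    apply: (reduce hL sU' iU' eU' _ _ Hirr).
      by exists u0; split => //; apply/eqP.
    by exists y => /U'V.
  have [y' Uy'] := not_all_ex_not _ _ Unot.
  apply: (reduce hL sU iU eU _ _ Hirr).
    by exists v0; split => //; apply: VU.
  by exists y'.
have [p [A [gA hA]]] := reindex_kraus Gen.
by exists p, A; split => // X; rewrite hL hA.
Qed.

End Main2.

Unset Implicit Arguments.
Set Strict Implicit.

Theorem theorem5p10 (C : numClosedFieldType) (d : nat) (n : 'I_d -> nat)
  (npos : forall i, (0 < n i)%N)
  (tau : {linear 'M[C]_(\sum_(i < d) n i) -> 'M[C]_(\sum_(i < d) n i)})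
  (tau_A : forall X, in_blockdiag X -> in_blockdiag (tau X))
  (tau_cp : completely_positive_on (@in_blockdiag C d n) tau) :
  let tauT := fun X => tau (blockdiag_part X) in
  [<-> irreducible_on (@in_blockdiag C d n) tau;
       irreducible_on (fun _ => True) tauT;
       exists (p : nat) (A : 'I_p -> 'M[C]_(\sum_(i < d) n i)),
         generates_full A /\
         forall X, tauT X = \sum_(i < p) adjmx (A i) *m X *m A i;
       exists (p : nat) (A : 'I_p -> 'M[C]_(\sum_(i < d) n i)),
         generates_full A /\
         forall X, in_blockdiag X -> tau X = \sum_(i < p) adjmx (A i) *m X *m A i].
Proof.
move=> tauT.
set blk := @tagnat.sig1 d n.
pose rep (j : 'I_d) := @tagnat.Rank d n j (Ordinal (npos j)).
have blk_rep : forall j, blk (rep j) = j by move=> j; rewrite /blk /rep tagnat.Rank1K.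
have inAb : forall X, in_blockdiag X <-> inA blk X by move=> X; exact: inAbd.
have tau_A' : forall X, inA blk X -> inA blk (tau X).
  by move=> X /inAb /tau_A /inAb.
have tT : forall X, tauT X = tau (phi blk X) by move=> X; rewrite /tauT bdE.
have [Z HZ] : psdmx (\mxblock_(a < _, b < _) tau (phi blk (delta_mx a b))).
  have := tau_cp _ (fun a b => blockdiag_part (delta_mx a b)).
  have e1 : \mxblock_(a < \sum_(i < d) n i, b < \sum_(i < d) n i)
      blockdiag_part (delta_mx a b : 'M[C]_(\sum_(i < d) n i)) =
      \mxblock_(a < _, b < _) phi blk (delta_mx a b).
    by apply: eq_mxblock => a b; rewrite bdE.
  have e2 : \mxblock_(a < \sum_(i < d) n i, b < \sum_(i < d) n i)
      tau (blockdiag_part (delta_mx a b : 'M[C]_(\sum_(i < d) n i))) =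
      \mxblock_(a < _, b < _) tau (phi blk (delta_mx a b)).
    by apply: eq_mxblock => a b; rewrite bdE.
  rewrite e1 e2.
  apply.
    by move=> a b; apply/inAb; rewrite bdE; apply: inA_phi.
  exact: (choi_in C blk_rep).
have iff0 : irreducible_on (@in_blockdiag C d n) tau <-> irr (inA blk) tau.
  by split; apply: irr_ext => // X; split => /inAb.
have iff1 : irreducible_on (fun _ => True) tauT <-> irr (fun _ => True) (fun X => tau (phi blk X)).
  by split; apply: irr_ext => // X; rewrite tT.
tfae.
- move/iff0 => h; apply/iff1; apply: L32.
  have [p [A [gA hA]]] := L13 tau_A' HZ h.
  by exists p, A.
- move/iff1 => h; have [p [A [gA hA]]] := L13 tau_A' HZ (L21 h).
  by exists p, A; split => // X; rewrite tT hA.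
- move=> [p [A [gA hA]]]; exists p, A; split => // X AX.
  by rewrite -hA /tauT AX.
- move=> [p [A [gA hA]]]; apply/iff0; apply: L41.
  by exists p, A; split => // X /inAb; apply: hA.
Qed.
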